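(* Let $\mathbf v=(v_1,\dots,v_m)$ and $\mathbf k=(k_1,\dots,k_m)$ be $m$-tuples of positive integers with $2\le k_i\le v_i$ for all $i$, and let $v_{\max}=\max_i v_i$ and $k_{\min}=\min_i k_i$. Then $C(\mathbf v,\mathbf k,2)\le C(v_{\max},k_{\min},2)$.
   Context: Let $X_1,\dots,X_m$ be pairwise disjoint sets with $|X_i|=v_i$. A block is an $m$-tuple $(B_1,\dots,B_m)$ with $B_i\subseteq X_i$, $|B_i|=k_i$. An $m$-tuple of sets $(T_1,\dots,T_m)$ is $(\mathbf v,\mathbf k,2)$-admissible if $T_i\subseteq X_i$, $|T_i|\le k_i$ and $\sum|T_i|=2$; it is contained in a block if $T_i\subseteq B_i$ for all $i$. A ${\rm GC}(\mathbf v,\mathbf k,2)$ is a finite family (repetitions allowed) of blocks containing every admissible tuple in at least one block; $C(\mathbf v,\mathbf k,2)$ is the minimum number of blocks. For integers $v\ge k\ge2$, $C(v,k,2)$ is the ordinary covering number: the minimum number of $k$-subsets of a $v$-set such that every $2$-subset is contained in at least one of them. *)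

(* Defs.v *)
From mathcomp Require Import all_boot.
Set Implicit Arguments. Unset Strict Implicit. Unset Printing Implicit Defensive.

(* Part i is X_i := 'I_(v i).  A tuple of subsets (T_1,...,T_m) is a dependent
   function T : forall i : 'I_m, {set 'I_(v i)}. *)
Definition mtuple (m : nat) (v : 'I_m -> nat) := forall i : 'I_m, {set 'I_(v i)}.

Definition is_block m (v k : 'I_m -> nat) (B : mtuple v) : Prop :=
  forall i, #|B i| = k i.

Definition admissible2 m (v k : 'I_m -> nat) (T : mtuple v) : Prop :=
  (forall i, #|T i| <= k i) /\ \sum_(i < m) #|T i| = 2.

Definition tuple_in m (v : 'I_m -> nat) (T B : mtuple v) : Prop :=
  forall i, T i \subset B i.

(* A GC(v,k,2) with n blocks: a family F_0..F_(n-1) (repetitions allowed) of blocks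
   containing every admissible tuple in at least one block. *)
Definition is_GC m (v k : 'I_m -> nat) (n : nat) (F : 'I_n -> mtuple v) : Prop :=
  (forall j, is_block k (F j)) /\
  (forall T, admissible2 k T -> exists j, tuple_in T (F j)).

Definition is_GC_number m (v k : 'I_m -> nat) (c : nat) : Prop :=
  (exists F : 'I_c -> mtuple v, is_GC k F) /\
  (forall n (F : 'I_n -> mtuple v), is_GC k F -> c <= n).

Definition is_covering (v k : nat) (F : seq {set 'I_v}) : Prop :=
  (forall B, B \in F -> #|B| = k) /\
  (forall P : {set 'I_v}, #|P| = 2 -> exists2 B, B \in F & P \subset B).

Definition is_covering_number (v k c : nat) : Prop :=
  (exists F : seq {set 'I_v}, is_covering k F /\ size F = c) /\
  (forall F : seq {set 'I_v}, is_covering k F -> c <= size F).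

(* Main.v *)
Require Import Defs.
From mathcomp Require Import all_boot zify.
Set Implicit Arguments. Unset Strict Implicit. Unset Printing Implicit Defensive.

Lemma pad_ex (T : finType) (A : {set T}) n :
  #|A| <= n -> n <= #|T| -> exists B : {set T}, (A \subset B) && (#|B| == n).
Proof.
move=> hA hn; have [d hd] : exists d, n = #|A| + d by exists (n - #|A|); rewrite subnKC.
elim: d A hA hd => [|d IH] A hA hd.
  by exists A; rewrite subxx hd addn0 eqxx.
have : 0 < #|~: A| by rewrite cardsCs setCK subn_gt0 (leq_trans _ hn) // hd addnS ltnS leq_addr.
case/card_gt0P => a; rewrite inE => aA.
have h1 : #|a |: A| <= n by rewrite cardsU1 aA hd /=; lia.
have h2 : n = #|a |: A| + d by rewrite cardsU1 aA hd /=; lia.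
have [B /andP[sB cB]] := IH _ h1 h2.
exists B; rewrite cB andbT; apply: subset_trans sB; exact: subsetUr.
Qed.

Definition pad (T : finType) (A : {set T}) n : {set T} :=
  odflt A [pick B : {set T} | (A \subset B) && (#|B| == n)].

Lemma padP (T : finType) (A : {set T}) n :
  #|A| <= n -> n <= #|T| -> A \subset pad A n /\ #|pad A n| = n.
Proof.
move=> h1 h2; rewrite /pad; case: pickP => [B /andP[-> /eqP ->]//|].
by have [B hB] := pad_ex h1 h2 => /(_ B); rewrite hB.
Qed.

Lemma bigmin_le (I : eqType) (r : seq I) (F : I -> nat) x0 i :
  i \in r -> \big[minn/x0]_(j <- r) F j <= F i.
Proof.
elim: r => [//|a r IH]; rewrite inE big_cons => /orP[/eqP->|/IH h].
  exact: geq_minl.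
exact: leq_trans (geq_minr _ _) h.
Qed.

Lemma card_bigcup_sum (m : nat) (T : finType) (A : 'I_m -> {set T}) :
  #|\bigcup_(i < m) A i| <= \sum_(i < m) #|A i|.
Proof.
apply: (big_ind2 (fun (x : {set T}) y => #|x| <= y)); first by rewrite cards0.
  by move=> x1 x2 y1 y2 h1 h2; apply: leq_trans (leq_card_setU _ _) (leq_add h1 h2).
by [].
Qed.

Theorem theorem3p18 (m : nat) (v k : 'I_m -> nat) (m_gt0 : 0 < m)
  (hk : forall i, 2 <= k i) (hkv : forall i, k i <= v i)
  (cGC cC : nat) :
  let vmax := \max_(i < m) v i in
  let kmin := \big[minn/k (Ordinal m_gt0)]_(i < m) k i in
  @is_GC_number m v k cGC -> is_covering_number vmax kmin cC -> cGC <= cC.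
Proof.
move=> vmax kmin [_ hmin] [[C [[hCk hCcov] <-]] _].
pose lift i (x : 'I_(v i)) : 'I_vmax := widen_ord (leq_bigmax i) x.
have lift_inj i : injective (lift i).
  by move=> x y /(congr1 val) /= /val_inj.
pose pre i (B : {set 'I_vmax}) := [set x | lift i x \in B].
pose Fam (j : 'I_(size C)) : mtuple v := fun i => pad (pre i (nth set0 C j)) (k i).
have hpre i B : #|pre i B| <= #|B|.
  rewrite -(card_imset _ (lift_inj i)); apply: subset_leq_card.
  by apply/subsetP => y /imsetP [x]; rewrite inE => hx ->.
have hkmin i : kmin <= k i by apply: bigmin_le; rewrite mem_index_enum.
have hpad (j : 'I_(size C)) i : pre i (nth set0 C j) \subset Fam j i /\ #|Fam j i| = k i.
  apply: padP; last by rewrite card_ord.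
  apply: leq_trans (hpre _ _) _; rewrite hCk ?mem_nth //.
apply: (hmin _ Fam); split; first by move=> j i; case: (hpad j i).
move=> T [_ hsum].
pose S := \bigcup_(i < m) lift i @: T i.
have hS : #|S| <= 2.
  apply: leq_trans (card_bigcup_sum _) _; rewrite -hsum.
  by apply: leq_sum => i _; apply: leq_imset_card.
have hV : 2 <= #|'I_vmax|.
  rewrite card_ord; apply: leq_trans (hk (Ordinal m_gt0)) _.
  exact: leq_trans (hkv _) (leq_bigmax _).
have [sP cP] := padP hS hV.
have [B BC PB] := hCcov _ cP.
have jl : index B C < size C by rewrite index_mem.
exists (Ordinal jl) => i.
case: (hpad (Ordinal jl) i) => + _; apply: subset_trans.
rewrite /= nth_index //; apply/subsetP => x xT; rewrite inE.
apply: (subsetP PB); apply: (subsetP sP); apply/bigcupP; exists i => //.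
exact: imset_f.
Qed.
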